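(* Let $T$ be a torus and $X$ a finite $T$-CW complex. For each $(t,x)\in\mathcal X^+\times\mathfrak t_{\mathbb C}$ we have an equality \[ L^2(S^1\wedge X_+)^{t,x}=S^1\wedge L^2X^{t,x}_+ \] of subsets of $L^2(S^1\wedge X_+)$.
   Context: $\mathbb T=\mathbb R/\mathbb Z$, $T$ torus, $\check T=\mathrm{Hom}(\mathbb T,T)$, $\mathfrak t_{\mathbb C}=\check T\otimes\mathbb C$. $\mathcal X^+=\{(t_1,t_2)\in\mathbb C^2:\mathbb Rt_1+\mathbb Rt_2=\mathbb C,\ \mathrm{Im}(t_1/t_2)>0\}$. For a $T$-space $Z$, $L^2Z=\mathrm{Map}(\mathbb T^2,Z)$ with $\mathbb T^2\times T$ acting by $((r,u)\cdot\gamma)(s)=u\cdot\gamma(s-r)$. $T(t,x)$ is the intersection of all closed subgroups $K\subset\mathbb T^2\times T$ with $(t,x)\in\mathrm{Lie}(K)\otimes\mathbb C\subset\mathbb C^2\times\mathfrak t_{\mathbb C}$, and $W^{t,x}$ denotes the $T(t,x)$-fixed subspace of a $\mathbb T^2\times T$-space $W$. $S^1$ has the trivial $T$-action, $X_+=X\sqcup\{\mathrm{pt}\}$ with $T$-fixed basepoint, and $S^1\wedge X_+$ is pointed. The set $S^1\wedge L^2X^{t,x}_+$ is regarded as a subset of $L^2(S^1\wedge X_+)$ via $[z,\gamma]\mapsto(s\mapsto[z,\gamma(s)])$, the basepoint going to the constant loop at the basepoint. *)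

(* Defs.v *)
From HB Require Import structures.
From mathcomp Require Import all_boot all_order all_algebra generic_quotient.
From mathcomp Require Import all_classical all_reals all_analysis.
From mathcomp Require Import complex.
Import numFieldNormedType.Exports.
Import Order.TTheory GRing.Theory Num.Theory.

Set Implicit Arguments.
Unset Strict Implicit.
Unset Printing Implicit Defensive.

Local Open Scope ring_scope.
Local Open Scope classical_set_scope.
Local Open Scope quotient_scope.

(* Conventions.  The rank-n torus T = R^n / Z^n is modelled through its      *)
(* universal cover: a T-action is an action of the additive group R^n on    *)
(* which the lattice Z^n acts trivially; a closed subgroup of a torus is a   *)
(* closed subgroup of R^n containing Z^n (its preimage); the exponential map *)
(* is the projection, so Lie(K) = {v | forall s, s v in K}.  Loops           *)
(* T^2 -> Z are the continuous Z^2-periodic maps R^2 -> Z.  With the         *)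
(* standard basis, check T = Z^n and t_C = C^n.                              *)

Section Defs.
Variable R : realType.

Definition lattice_vec (n : nat) (v : 'rV[R]_n) : Prop :=
  forall i, v ord0 i \is a Num.int.

Definition circ_rel' (a b : R) : bool := (a - b) \is a Num.int.

Lemma circ_rel_refl : reflexive circ_rel'.
Proof. by move=> a; rewrite /circ_rel' subrr rpred0. Qed.

Lemma circ_rel_sym : symmetric circ_rel'.
Proof.
move=> a b; apply/idP/idP; rewrite /circ_rel' => h;
  by rewrite -opprB rpredN.
Qed.

Lemma circ_rel_trans : transitive circ_rel'.
Proof.
move=> b a c hab hbc; rewrite /circ_rel'.
have -> : a - c = (a - b) + (b - c) by rewrite addrA subrK.
by rewrite rpredD.
Qed.

Definition circ_rel := EquivRel circ_rel' circ_rel_refl circ_rel_sym circ_rel_trans.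

Definition circ := {eq_quot circ_rel}.
HB.instance Definition _ := Topological.copy circ (quotient_topology circ).
HB.instance Definition _ := Quotient.on circ.

Definition circ0 : circ := \pi_circ 0.

End Defs.

(* ---------------- X_+ : X with a disjoint (isolated) basepoint ----------- *)
Definition plus (X : Type) := option X.

Section Plus.
Variable X : topologicalType.
HB.instance Definition _ := Choice.copy (plus X) (option X).

Definition plus_open (U : set (plus X)) := open (Some @^-1` U : set X).

Program Definition plus_topologicalType_mixin :=
  @isOpenTopological.Build (plus X) plus_open _ _ _.
Next Obligation. by rewrite /plus_open preimage_setT; exact: openT. Qed.
Next Obligation. by move=> ? ? ? ?; exact: openI. Qed.
Next Obligation. by move=> I f ofi; apply: bigcup_open => i _; exact: ofi. Qed.
HB.instance Definition _ := plus_topologicalType_mixin.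
End Plus.

Section Smash.
Variable R : realType.
Variable X : topologicalType.

Definition smash_base_type := (circ R * plus X)%type.

(* points of the wedge S^1 \/ X_+ inside S^1 x X_+ *)
Definition collapsed (p : smash_base_type) : bool :=
  (p.1 == circ0 R) || (p.2 == None).

Definition smash_rel' (p q : smash_base_type) : bool :=
  (p == q) || (collapsed p && collapsed q).

Lemma smash_rel_refl : reflexive smash_rel'.
Proof. by move=> p; rewrite /smash_rel' eqxx. Qed.

Lemma smash_rel_sym : symmetric smash_rel'.
Proof. by move=> p q; rewrite /smash_rel' eq_sym andbC. Qed.

Lemma smash_rel_trans : transitive smash_rel'.
Proof.
move=> q p r; rewrite /smash_rel'.
case/orP=> [/eqP -> //|/andP[cp cq]].
case/orP=> [/eqP <-|/andP[_ cr]]; first by rewrite cp cq orbT.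
by rewrite cp cr orbT.
Qed.

Definition smash_rel :=
  EquivRel smash_rel' smash_rel_refl smash_rel_sym smash_rel_trans.

Definition smash := {eq_quot smash_rel}.
HB.instance Definition _ := Topological.copy smash (quotient_topology smash).
HB.instance Definition _ := Quotient.on smash.

Definition smash_pt (z : circ R) (y : plus X) : smash := \pi_smash (z, y).

Definition smash_base : smash := smash_pt (circ0 R) None.

Definition smash_act (n : nat) (act : 'rV[R]_n -> X -> X)
  (u : 'rV[R]_n) (q : smash) : smash :=
  smash_pt (repr q).1 (omap (act u) (repr q).2).

End Smash.

Section TSpaces.
Variable R : realType.
Variable n : nat.

Definition Taction (X : topologicalType) (act : 'rV[R]_n -> X -> X) : Prop :=
  [/\ continuous (fun p : ('rV[R]_n * X)%type => act p.1 p.2),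
      (forall x, act 0 x = x),
      (forall u v x, act (u + v) x = act u (act v x)) &
      (forall m x, lattice_vec m -> act m x = x)].

Definition torus_closed_subgroup (H : set 'rV[R]_n) : Prop :=
  [/\ closed H,
      (forall a b, H a -> H b -> H (a - b)) &
      (forall m, lattice_vec m -> H m)].

Definition sqnorm (k : nat) (d : 'rV[R]_k) : R := \sum_(i < k) d ord0 i ^+ 2.

(* an equivariant cell  T/H x D^k  with characteristic map
   (T/H x D^k -> X) given as a map on R^n x D^k, D^k the unit ball of R^k *)
Record Tcell (X : Type) := TCell {
  cdim : nat;
  cgrp : set 'rV[R]_n;
  cmap : ('rV[R]_n * 'rV[R]_cdim)%type -> X }.
Arguments cmap {X} _ _.
Arguments cdim {X} _.
Arguments cgrp {X} _ _.

Definition celldom (X : Type) (cl : Tcell X) :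
  set ('rV[R]_n * 'rV[R]_(cdim cl))%type := [set p | sqnorm p.2 <= 1].
Arguments celldom {X} cl.

Definition finite_TCW (X : topologicalType) (act : 'rV[R]_n -> X -> X) : Prop :=
  [/\ Taction act, hausdorff_space X &
  exists (N : nat) (c : 'I_N -> Tcell X),
   (forall i, torus_closed_subgroup (cgrp (c i))) /\
   (forall i, {within celldom (c i), continuous (cmap (c i))}) /\
   (forall i u (p : ('rV[R]_n * 'rV[R]_(cdim (c i)))%type), sqnorm p.2 <= 1 ->
     cmap (c i) (u + p.1, p.2) = act u (cmap (c i) p)) /\
   (forall i h (p : ('rV[R]_n * 'rV[R]_(cdim (c i)))%type), cgrp (c i) h ->
     sqnorm p.2 <= 1 -> cmap (c i) (p.1 + h, p.2) = cmap (c i) p) /\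
   (* the boundary T/H x S^(k-1) is attached to the (k-1)-skeleton *)
   (forall i (p : ('rV[R]_n * 'rV[R]_(cdim (c i)))%type), sqnorm p.2 = 1 ->
     exists (j : 'I_N) (q : ('rV[R]_n * 'rV[R]_(cdim (c j)))%type),
       [/\ (cdim (c j) < cdim (c i))%N, sqnorm q.2 <= 1 &
           cmap (c j) q = cmap (c i) p]) /\
   (forall x : X, exists (i : 'I_N) (p : ('rV[R]_n * 'rV[R]_(cdim (c i)))%type),
     sqnorm p.2 < 1 /\ cmap (c i) p = x) /\
   (forall i j (p : ('rV[R]_n * 'rV[R]_(cdim (c i)))%type)
              (q : ('rV[R]_n * 'rV[R]_(cdim (c j)))%type),
     sqnorm p.2 < 1 -> sqnorm q.2 < 1 -> cmap (c i) p = cmap (c j) q -> i = j) /\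
   (forall i (p q : ('rV[R]_n * 'rV[R]_(cdim (c i)))%type),
     sqnorm p.2 < 1 -> sqnorm q.2 < 1 -> cmap (c i) p = cmap (c i) q ->
     p.2 = q.2 /\ cgrp (c i) (p.1 - q.1)) /\
   (* ... and X carries the weak (quotient) topology *)
   (forall A : set X, closed A <->
     (forall i, exists C : set ('rV[R]_n * 'rV[R]_(cdim (c i)))%type,
        closed C /\
        [set p | sqnorm p.2 <= 1 /\ A (cmap (c i) p)] =
        [set p | sqnorm p.2 <= 1 /\ C p]))].

Definition big_closed_subgroup (K : set ('rV[R]_2 * 'rV[R]_n)%type) : Prop :=
  [/\ closed K,
      (forall a b, K a -> K b -> K (a.1 - b.1, a.2 - b.2)) &
      (forall m : ('rV[R]_2 * 'rV[R]_n)%type,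
          lattice_vec m.1 -> lattice_vec m.2 -> K m)].

Definition LieK (K : set ('rV[R]_2 * 'rV[R]_n)%type) :
  set ('rV[R]_2 * 'rV[R]_n)%type :=
  [set v | forall s : R, K (s *: v.1, s *: v.2)].

Definition in_LieC (K : set ('rV[R]_2 * 'rV[R]_n)%type)
  (t : (R[i] * R[i])%type) (x : 'rV[R[i]]_n) : Prop :=
  exists a b, [/\ LieK K a, LieK K b,
    t.1 = Complex (a.1 ord0 ord0) (b.1 ord0 ord0),
    t.2 = Complex (a.1 ord0 ord_max) (b.1 ord0 ord_max) &
    forall l, x ord0 l = Complex (a.2 ord0 l) (b.2 ord0 l)].

Definition Ttx (t : (R[i] * R[i])%type) (x : 'rV[R[i]]_n) :
  set ('rV[R]_2 * 'rV[R]_n)%type :=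
  [set k | forall K, big_closed_subgroup K -> in_LieC K t x -> K k].

Definition L2 (Z : topologicalType) : set ('rV[R]_2 -> Z) :=
  [set g | continuous g /\ forall s m, lattice_vec m -> g (s + m) = g s].

Definition L2act (Z : Type) (act : 'rV[R]_n -> Z -> Z)
  (k : ('rV[R]_2 * 'rV[R]_n)%type) (g : 'rV[R]_2 -> Z) : 'rV[R]_2 -> Z :=
  fun s => act k.2 (g (s - k.1)).

Definition L2fixed (Z : topologicalType) (act : 'rV[R]_n -> Z -> Z)
  (t : (R[i] * R[i])%type) (x : 'rV[R[i]]_n) : set ('rV[R]_2 -> Z) :=
  [set g | L2 g /\ forall k, Ttx t x k -> L2act act k g = g].

End TSpaces.

Definition Xplus (R : realType) (t : (R[i] * R[i])%type) : Prop :=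
  (forall z : R[i], exists a b : R,
      z = Complex a 0 * t.1 + Complex b 0 * t.2) /\
  0 < complex.Im (t.1 / t.2).

(* Main.v *)
Require Import Defs.
From HB Require Import structures.
From mathcomp Require Import all_boot all_order all_algebra generic_quotient.
From mathcomp Require Import all_classical all_reals all_analysis.
From mathcomp Require Import complex.
From mathcomp Require Import ring lra.
Import numFieldNormedType.Exports.
Import Order.TTheory GRing.Theory Num.Theory.
Local Open Scope ring_scope.
Local Open Scope classical_set_scope.
Local Open Scope quotient_scope.

Lemma Xplus_det (R : realType) (x1 y1 x2 y2 : R) :
  Xplus (Complex x1 y1, Complex x2 y2) -> x1 * y2 - x2 * y1 != 0.
Proof.
move=> [hs _].
have [a [b]] := hs 1; have [c [d]] := hs (Complex 0 1).
rewrite /= => [[e3 e4]] [e1 e2].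
have E : (x1 * y2 - x2 * y1) * (a * d - b * c) =
  (a * x1 - 0 * y1 + (b * x2 - 0 * y2)) * (c * y1 + 0 * x1 + (d * y2 + 0 * x2))
  - (c * x1 - 0 * y1 + (d * x2 - 0 * y2)) * (a * y1 + 0 * x1 + (b * y2 + 0 * x2)).
  by ring.
move: E; rewrite -e1 -e2 -e3 -e4.
apply: contra_eqN => /eqP ->; rewrite mul0r.
lra.
Qed.

Lemma row2_eq (R : realType) (u v : 'rV[R]_2) :
  u ord0 ord0 = v ord0 ord0 -> u ord0 ord_max = v ord0 ord_max -> u = v.
Proof.
move=> h0 h1; apply/matrixP => i j; rewrite (ord1 i).
case: j => [[|[|j]] hj].
- by rewrite (_ : Ordinal hj = ord0) //; apply: val_inj.
- by rewrite (_ : Ordinal hj = ord_max) //; apply: val_inj.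
- by [].
Qed.

Lemma Ttx_surj (R : realType) n (t : (R[i] * R[i])%type) (x : 'rV[R[i]]_n) :
  Xplus t -> forall r : 'rV[R]_2, exists k, Ttx t x k /\ k.1 = r.
Proof.
case: t => [[x1 y1] [x2 y2]] ht r.
have hD := Xplus_det _ _ _ _ _ ht.
set D := x1 * y2 - x2 * y1 in hD.
pose A : 'rV[R]_2 := \row_(i < 2) (if i == ord0 then x1 else x2).
pose B : 'rV[R]_2 := \row_(i < 2) (if i == ord0 then y1 else y2).
pose XA : 'rV[R]_n := \row_(l < n) complex.Re (x ord0 l).
pose XB : 'rV[R]_n := \row_(l < n) complex.Im (x ord0 l).
pose s := (r ord0 ord0 * y2 - r ord0 ord_max * y1) / D.
pose s' := (x1 * r ord0 ord_max - x2 * r ord0 ord0) / D.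
exists (s *: A + s' *: B, s *: XA + s' *: XB); split; last first.
  apply: row2_eq; rewrite !mxE /= /s /s'.
    by rewrite /D; field.
  by rewrite /D; field.
move=> K [cK subK latK] [a [b [La Lb e1 e2 ex]]].
case: e1 => ea1 eb1; case: e2 => ea2 eb2.
have hA : a.1 = A by apply: row2_eq; rewrite mxE.
have hB : b.1 = B by apply: row2_eq; rewrite mxE.
have hXA : a.2 = XA by apply/matrixP => i l; rewrite (ord1 i) mxE ex.
have hXB : b.2 = XB by apply/matrixP => i l; rewrite (ord1 i) mxE ex.
have := subK _ _ (La s) (Lb (- s')).
by rewrite /= hA hB hXA hXB !scaleNr !opprK.
Qed.
Lemma open_setX' (U V : topologicalType) (A : set U) (B : set V) :
  open A -> open B -> open (A `*` B).
Proof.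
move=> oA oB; rewrite openE => -[a b] [Aa Bb].
exists (A, B) => //; split.
- by move: oA; rewrite openE; exact.
- by move: oB; rewrite openE; exact.
Qed.

Section SmashL.
Variable R : realType.
Variable X : topologicalType.
Local Notation S := (smash R X).

Lemma smash_eqP (p q : smash_base_type R X) :
  reflect (\pi_S p = \pi_S q) (smash_rel' p q).
Proof. exact: (@eqmodP _ (smash_rel R X) p q). Qed.

Lemma collapsed_base (p : smash_base_type R X) : collapsed p -> \pi_S p = smash_base R X.
Proof.
move=> cp; apply/smash_eqP; rewrite /smash_rel' cp /collapsed /= eqxx.
by rewrite orbT.
Qed.

Lemma noncollapsed_eq (p q : smash_base_type R X) : ~~ collapsed p ->
  \pi_S p = \pi_S q -> p = q.
Proof.
move=> np /smash_eqP; rewrite /smash_rel' (negbTE np) /= orbF.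
by move/eqP.
Qed.

Lemma repr_noncollapsed (p : smash_base_type R X) : ~~ collapsed p ->
  repr (\pi_S p) = p.
Proof.
move=> np; apply/esym; apply: (@noncollapsed_eq p (repr (\pi_S p)) np); by rewrite reprK.
Qed.

Lemma act_base n (act : 'rV[R]_n -> X -> X) u :
  smash_act act u (smash_base R X) = smash_base R X.
Proof.
rewrite /smash_act /smash_pt.
have : collapsed (repr (smash_base R X)).
  have := @smash_eqP (repr (smash_base R X)) (circ0 R, None).
  rewrite reprK => /(_ _) h.
  have : smash_rel' (repr (smash_base R X)) (circ0 R, None).
    by apply/smash_eqP; rewrite reprK.
  rewrite /smash_rel' /collapsed /= eqxx orbT andbT.
  by case/orP => // /eqP ->; rewrite /= eqxx.
case: (repr _) => z y; rewrite /collapsed /= => c.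
apply: collapsed_base; rewrite /collapsed /=.
by case/orP: c => [-> // | /eqP -> /=]; rewrite orbT.
Qed.

Lemma act_noncoll n (act : 'rV[R]_n -> X -> X) u z y : z != circ0 R ->
  smash_act act u (smash_pt z (Some y)) = smash_pt z (Some (act u y)).
Proof.
move=> nz; rewrite /smash_act /smash_pt repr_noncollapsed //.
by rewrite /collapsed /= (negbTE nz).
Qed.

Lemma smash_inj z z' a b : z != circ0 R ->
  smash_pt z (Some a) = smash_pt z' (Some b) :> S -> z = z' /\ a = b.
Proof.
move=> nz /noncollapsed_eq; rewrite /collapsed /= (negbTE nz) => /(_ isT) [-> ->].
by [].
Qed.

Lemma smash_pt_circ0 y : smash_pt (circ0 R) y = smash_base R X.
Proof. by apply: collapsed_base; rewrite /collapsed /= eqxx. Qed.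

End SmashL.
Lemma int_compl_open (R : realType) : open (~` [set a : R | a \is a Num.int]).
Proof.
rewrite openE => a /= na.
have Ha : (Num.floor a)%:~R < a < (Num.floor a + 1)%:~R.
  rewrite Num.Theory.floorD1_gt andbT lt_neqAle Num.Theory.floor_le andbT.
  apply/negP => /eqP e; apply: na; rewrite -e; exact: Num.Theory.intr_int.
have := @itv_open _ R (Num.floor a)%:~R (Num.floor a + 1)%:~R.
rewrite openE => /(_ a); rewrite /= in_itv /= => /(_ Ha).
apply: filterS => c /=; rewrite in_itv /= => /andP [h1 h2] /Num.Theory.intrP [m em].
move: h1 h2; rewrite em !ltr_int => h1 h2.
have : (Num.floor a < m < Num.floor a + 1)%R by rewrite h1 h2.
by move=> /andP[]; rewrite -lezD1 => /le_lt_trans h /h; rewrite ltxx.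
Qed.

Lemma Some_continuous (X : topologicalType) : continuous (Some : X -> plus X).
Proof. by apply/continuousP => A; rewrite /open /= /plus_open. Qed.

Lemma circ_ne0_open (R : realType) : open [set z : circ R | z != circ0 R].
Proof.
rewrite /open /= /quotient_open.
have -> : \pi_(circ R) @^-1` [set z : circ R | z != circ0 R] =
          ~` [set a : R | a \is a Num.int].
  have h : forall a : R, (\pi_(circ R) a = \pi_(circ R) 0) <-> (circ_rel' a 0).
    move=> a; split => H; [exact/(@eqmodP _ (circ_rel R) a 0) | exact/(@eqmodP _ (circ_rel R) a 0)].
  apply/seteqP; split => a /=; rewrite /circ0.
    by move=> /eqP nh hi; apply: nh; apply/h; rewrite /circ_rel' subr0.
  by move=> nh; apply/eqP => /h; rewrite /circ_rel' subr0.
exact: int_compl_open.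
Qed.

Theorem mainTheorem17 (R : realType) (n : nat) (X : topologicalType)
    (act : 'rV[R]_n -> X -> X) (hX : finite_TCW act)
    (t : (R[i] * R[i])%type) (x : 'rV[R[i]]_n) (ht : Xplus t) :
  L2fixed (smash_act act) t x =
  [set G : 'rV[R]_2 -> smash R X |
     G = (fun _ => smash_base R X) \/
     exists (z : circ R) (g : 'rV[R]_2 -> X),
       L2fixed act t x g /\ G = (fun s => smash_pt z (Some (g s)))].
Proof.
rewrite eqEsubset; split.
- move=> G [[cG perG] fixG].
  case: (boolP (collapsed (repr (G 0)))) => c0.
    have G0 : G 0 = smash_base R X by rewrite -[G 0]reprK collapsed_base.
    left; apply/funext => r.
    have [k [Tk k1]] := Ttx_surj _ _ _ x ht r.
    have := congr1 (fun f => f r) (fixG k Tk).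
    by rewrite /L2act k1 subrr G0 act_base => <-.
  right; case E: (repr (G 0)) c0 => [z [y|]]; rewrite /collapsed /= ?orbT //.
  rewrite orbF => nz.
  have G0 : G 0 = smash_pt z (Some y) by rewrite /smash_pt -E reprK.
  have Gr : forall r, exists w, G r = smash_pt z (Some w).
    move=> r; have [k [Tk k1]] := Ttx_surj _ _ _ x ht r.
    have := congr1 (fun f => f r) (fixG k Tk).
    rewrite /L2act k1 subrr G0 act_noncoll // => <-.
    by eexists.
  pose g r := odflt y (repr (G r)).2.
  have Gg : forall r, G r = smash_pt z (Some (g r)).
    move=> r; case: (Gr r) => w Gw; rewrite /g Gw /smash_pt repr_noncollapsed //.
    by rewrite /collapsed /= (negbTE nz).
  exists z, g; split; last by apply/funext.
  split; [split|].
  + apply/continuousP => U oU.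
    pose V := [set q : smash R X | exists z' w,
                 [/\ z' != circ0 R, U w & q = smash_pt z' (Some w)]].
    have -> : g @^-1` U = G @^-1` V.
      apply/seteqP; split => r /=.
        by move=> Ur; exists z, (g r); rewrite Gg.
      move=> [z' [w [_ Uw]]]; rewrite Gg => /smash_inj [] // _ ->.
      exact: Uw.
    move/continuousP: cG; apply.
    rewrite /open /= /quotient_open.
    have -> : \pi_(smash R X) @^-1` V =
      [set z' : circ R | z' != circ0 R] `*` [set o : plus X | exists2 w, o = Some w & U w].
      apply/seteqP; split => -[z' o] /=.
        move=> [z'' [w [nz' Uw]]] /esym /noncollapsed_eq.
        rewrite /collapsed /= (negbTE nz') => /(_ isT) [<- <-].
        by split => //; exists w.
      by move=> [nz' [w -> Uw]]; exists z', w.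
    apply: open_setX'; first exact: circ_ne0_open.
    rewrite /open /= /plus_open.
    have -> : Some @^-1` [set o : plus X | exists2 w, o = Some w & U w] = U.
      apply/seteqP; split => w /=; first by move=> [w' [->]].
      by move=> Uw; exists w.
    exact: oU.
  + move=> s m lm; have := perG s m lm; rewrite !Gg => /smash_inj [] //.
  + move=> k Tk; apply/funext => s.
    have := congr1 (fun f => f s) (fixG k Tk).
    rewrite /L2act !Gg act_noncoll // => /smash_inj [] //.
- move=> G [-> | [z [g [[[cg pg] fg] ->]]]].
    split; first split.
    - exact: cst_continuous.
    - by [].
    by move=> k _; apply/funext => s; rewrite /L2act act_base.
  split; [split|].
  + have hP : continuous (fun s => (z, Some (g s)) : circ R * plus X).
      move=> s.
      have h2 : (fun s => Some (g s) : plus X) @ s --> (Some (g s) : plus X).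
        apply: continuous_comp; first exact: cg.
        exact: Some_continuous.
      have h1 : (fun _ : 'rV[R]_2 => z) @ s --> z by exact: (@cst_continuous _ _ z s).
      exact: (cvg_pair h1 h2).
    have hpi := @pi_continuous _ (smash R X).
    by move=> s; apply: (continuous_comp (hP s)); exact: hpi.
  + by move=> s m lm; rewrite pg.
  + move=> k Tk; apply/funext => s; rewrite /L2act.
    have := congr1 (fun f => f s) (fg k Tk); rewrite /L2act => <-.
    case: (eqVneq z (circ0 R)) => [->|nz].
      by rewrite !smash_pt_circ0 act_base.
    by rewrite act_noncoll.
Qed.
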